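(* Fix $k\ge2$ and $0<\theta<1$. Let $f_d:\{0,1\}^{m_d}\to\{0,1\}^{L_d}$ be a family of functions computable by $\mathbf{NC}^0$ circuits, let $W_1,\dots,W_{m_d}$ be independent uniform random bits, and let $X'=f_d(W)$. Then the total variation distance between the distributions of $X'$ and $X^{(d)}$ is $\Omega(1)$ as $d\to\infty$.
   Context: Broadcast (Ising) tree model: complete $k$-ary tree of depth $d$; $L_d$ = leaves; $\sigma_\rho$ uniform on $\{0,1\}$; each child $v$ of $u$ independently has $\sigma_v=\sigma_u$ with probability $(1+\theta)/2$ and $1-\sigma_u$ otherwise; $X^{(d)}=(\sigma_v)_{v\in L_d}$. An $\mathbf{NC}^0$ circuit family is one in which each output bit depends on at most a constant number $c$ (independent of $d$) of input bits. *)

(* Defs.v *)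
From HB Require Import structures.
From mathcomp Require Import all_boot all_order all_algebra.
From mathcomp Require Import reals.
Set Implicit Arguments. Unset Strict Implicit. Unset Printing Implicit Defensive.
Import Order.TTheory GRing.Theory Num.Theory.
Local Open Scope ring_scope.

(* Complete k-ary tree of depth d: a vertex at depth j (0 <= j <= d) is the
   path j.-tuple 'I_k from the root; the root is the empty tuple at depth 0,
   the children of t at depth j < d are rcons t i, i : 'I_k.
   Leaves L_d = vertices at depth d = d.-tuple 'I_k. *)
Definition vert (k d : nat) := {j : 'I_d.+1 & j.-tuple 'I_k}.

Definition vin k d (j : 'I_d) (t : j.-tuple 'I_k) : vert k d :=
  existT (fun j : 'I_d.+1 => j.-tuple 'I_k) (widen_ord (leqnSn d) j) t.

Definition vchild k d (j : 'I_d) (t : j.-tuple 'I_k) (i : 'I_k) : vert k d :=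
  existT (fun j : 'I_d.+1 => j.-tuple 'I_k) (@Ordinal d.+1 j.+1 (ltn_ord j))
    [tuple of rcons t i].

Definition vleaf k d (t : d.-tuple 'I_k) : vert k d :=
  existT (fun j : 'I_d.+1 => j.-tuple 'I_k) ord_max t.

Definition bweight (R : realType) (theta : R) (a b : bool) : R :=
  if a == b then (1 + theta) / 2 else (1 - theta) / 2.

(* joint law of the broadcast process on all vertices: root uniform on {0,1},
   each edge independently *)
Definition bjoint (R : realType) (theta : R) k d (s : {ffun vert k d -> bool}) : R :=
  2^-1 * \prod_(j < d) \prod_(t : j.-tuple 'I_k) \prod_(i < k)
           bweight theta (s (vin t)) (s (vchild t i)).

(* law of X^(d) = (sigma_v)_{v in L_d} *)
Definition leafLaw (R : realType) (theta : R) k d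
    (x : {ffun d.-tuple 'I_k -> bool}) : R :=
  \sum_(s : {ffun vert k d -> bool} | [forall t, s (vleaf t) == x t])
     bjoint theta s.

Definition pushLaw (R : realType) (m : nat) (T : finType)
    (f : {ffun 'I_m -> bool} -> T) (x : T) : R :=
  #|[set w | f w == x]|%:R / (2 ^+ m).

Definition tvdist (R : realType) (T : finType) (P Q : T -> R) : R :=
  2^-1 * \sum_(x : T) `|P x - Q x|.

(* NC^0 locality: every output bit depends on at most c input bits *)
Definition local_c (m : nat) (O : finType) (c : nat)
    (f : {ffun 'I_m -> bool} -> {ffun O -> bool}) : Prop :=
  forall o : O, exists S : {set 'I_m}, (#|S| <= c)%N /\
    forall w w' : {ffun 'I_m -> bool},
      (forall i, i \in S -> w i = w' i) -> f w o = f w' o.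

(* Main.v *)
Require Import Defs.
From HB Require Import structures.
From mathcomp Require Import all_boot all_order all_algebra.
From mathcomp Require Import reals.
From mathcomp Require Import zify ring lra.
Set Implicit Arguments. Unset Strict Implicit. Unset Printing Implicit Defensive.
Import Order.TTheory GRing.Theory Num.Theory.
Local Open Scope ring_scope.

Section Flip.
Variables (V : finType) (root : V) (par : V -> V) (dep : V -> nat).
Hypothesis hdep : forall v, v != root -> (dep (par v) < dep v)%N.
Definition flipf (s : {ffun V -> bool}) : {ffun V -> bool} :=
  [ffun v => if v == root then s v else s v (+) s (par v)].
Lemma flipf_inj : injective flipf.
Proof.
move=> s s' E; apply/ffunP => v.
have [n] := ubnP (dep v); elim: n v => // n IH v /ltnSE Hv.
have := congr1 (fun g : {ffun V -> bool} => g v) E; rewrite !ffunE.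
case: eqP => [_ //|/eqP nr] H.
have e := IH (par v) (leq_trans (hdep nr) Hv).
by rewrite e in H; move: H; case: (s v); case: (s' v); case: (s' (par v)).
Qed.
End Flip.

Lemma vert_eq k d (j1 j2 : 'I_d.+1) (t1 : j1.-tuple 'I_k) (t2 : j2.-tuple 'I_k) :
  val j1 = val j2 -> val t1 = val t2 ->
  existT (fun j : 'I_d.+1 => j.-tuple 'I_k) j1 t1 = existT _ j2 t2.
Proof.
case: j1 t1 => a pa t1; case: j2 t2 => b pb t2 /= eab; subst b.
rewrite (bool_irrelevance pb pa) => e; congr existT; exact: val_inj.
Qed.

Definition vroot k d : vert k d :=
  existT (fun j : 'I_d.+1 => j.-tuple 'I_k) ord0 [tuple].

Definition vpar k d (v : vert k d) : vert k d :=
  let: existT j t := v in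
  existT (fun j : 'I_d.+1 => j.-tuple 'I_k)
    (@Ordinal d.+1 j.-1 (leq_ltn_trans (leq_pred j) (ltn_ord j)))
    [tuple tnth t (widen_ord (leq_pred j) i) | i < j.-1].

Definition vdep k d (v : vert k d) : nat := val (tag v).

Lemma vdep_par k d (v : vert k d) : v != vroot k d -> (vdep (vpar v) < vdep v)%N.
Proof.
case: v => -[[|j] pj] t /=; last by rewrite /vdep /=.
case/eqP; apply: vert_eq => //=.
by rewrite (tuple0 t).
Qed.

Lemma prod_rcons (R : comRingType) (T : finType) n (F : (n.+1).-tuple T -> R) :
  \prod_(t : n.+1 .-tuple T) F t =
  \prod_(t : n.-tuple T) \prod_(i : T) F [tuple of rcons t i].
Proof.
rewrite pair_big /=.
have hinj : injective (fun p : n.-tuple T * T => [tuple of rcons p.1 p.2]).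
  move=> [a x] [b y] /(congr1 val) /= /eqP; rewrite eqseq_rcons => /andP[/eqP e /eqP ->].
  by congr pair; apply: val_inj.
have hb := inj_card_bij hinj.
rewrite (reindex _ (onW_bij _ (hb _))) //.
by rewrite card_prod !card_tuple expnS mulnC.
Qed.

Definition wt (R : realType) (theta : R) (b : bool) : R :=
  if b then (1 - theta) / 2 else (1 + theta) / 2.

Definition Wv (R : realType) (theta : R) k d (v : vert k d) (b : bool) : R :=
  if v == vroot k d then 2^-1 else wt theta b.

Definition flipv k d := @flipf (vert k d) (vroot k d) (@vpar k d).

Lemma vchild_par k d (j : 'I_d) (t : j.-tuple 'I_k) (i : 'I_k) :
  vpar (vchild t i) = vin t.
Proof.
apply: vert_eq => //.
apply: (@congr1 (j.-tuple 'I_k) _ val); apply: eq_from_tnth => x.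
by rewrite tnth_mktuple !(tnth_nth i) /= nth_rcons size_tuple ltn_ord.
Qed.

Lemma vchild_neq k d (j : 'I_d) (t : j.-tuple 'I_k) (i : 'I_k) :
  vchild t i != vroot k d.
Proof. by apply/eqP => /(congr1 (@vdep k d)). Qed.


Lemma prod_vert (R : comRingType) k d (G : vert k d -> R) :
  \prod_(v : vert k d) G v =
  \prod_(j : 'I_d.+1) \prod_(t : j.-tuple 'I_k) G (existT _ j t).
Proof.
rewrite (sig_big_dep (J := fun j : 'I_d.+1 => j.-tuple 'I_k) xpredT (fun _ _ => true)
   (fun j t => G (existT _ j t))) /=.
by apply: eq_bigr => -[j t].
Qed.

Lemma bjoint_flip (R : realType) (theta : R) k d (s : {ffun vert k d -> bool}) :
  bjoint theta s = \prod_v Wv theta v (flipv s v).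
Proof.
rewrite prod_vert big_ord_recl /bjoint.
congr (_ * _).
  rewrite (big_pred1 [tuple]); last by move=> t; apply/esym/eqP/tuple0.
  have -> : existT (fun j : 'I_d.+1 => j.-tuple 'I_k) ord0 [tuple] = vroot k d by [].
  by rewrite /Wv eqxx.
apply: eq_bigr => j _.
have E := @prod_rcons _ _ j (fun t : (j.+1).-tuple 'I_k => Wv theta (existT (fun j : 'I_d.+1 => j.-tuple 'I_k) (lift ord0 j) t) (flipv s (existT _ (lift ord0 j) t))).
have H : nat_of_ord (@lift d.+1 ord0 j) = j.+1 := erefl.
apply: esym; refine (etrans E _).
apply: eq_bigr => t _; apply: eq_bigr => i _.
have -> : existT (fun j : 'I_d.+1 => j.-tuple 'I_k) (lift ord0 j) [tuple of rcons t i] = vchild t i.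
  by apply: vert_eq.
rewrite /flipv /flipf ffunE /Wv (negbTE (vchild_neq t i)) vchild_par /wt /bweight.
by case: (s (vin t)); case: (s (vchild t i)).
Qed.

Lemma mk_take (T : Type) (x0 : T) N n (t : N.-tuple T) (H : (n <= N)%N) :
  val [tuple tnth t (widen_ord H x) | x < n] = take n (val t).
Proof.
apply: (@eq_from_nth _ x0).
  by rewrite size_tuple size_takel // size_tuple.
move=> i; rewrite size_tuple => lt.
rewrite -[i]/(nat_of_ord (Ordinal lt)) nth_mktuple (tnth_nth x0) nth_take //=.
Qed.

Lemma mk_take0 (T : Type) N n (t : N.-tuple T) (H : (n <= N)%N) :
  val [tuple tnth t (widen_ord H x) | x < n] = take n (val t).
Proof.
case: n H => [|n] H.
  by rewrite take0; apply: size0nil; rewrite size_tuple.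
exact: (mk_take (tnth t (Ordinal (leq_trans (ltn0Sn n) H)))).
Qed.

Lemma ord_le d (i : 'I_d.+1) : (i <= d)%N. Proof. exact: ltn_ord i. Qed.

Definition pl k d (t : d.-tuple 'I_k) (n : nat) : vert k d :=
  existT (fun j : 'I_d.+1 => j.-tuple 'I_k) (inord n)
     [tuple tnth t (widen_ord (ord_le (inord n)) x) | x < inord n].

Definition vseq k d (v : vert k d) : seq 'I_k := val (tagged v).

Lemma vdep_pl k d (t : d.-tuple 'I_k) n : (n <= d)%N -> vdep (pl t n) = n.
Proof. by move=> le; rewrite /vdep /= inordK. Qed.

Lemma vseq_pl k d (t : d.-tuple 'I_k) n (x0 : 'I_k) : (n <= d)%N -> vseq (pl t n) = take n (val t).
Proof.
move=> le; rewrite /vseq; etransitivity; first exact: (mk_take0 t (ord_le (inord n))).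
by rewrite inordK.
Qed.

Lemma vert_eq2 k d (v w : vert k d) : vdep v = vdep w -> vseq v = vseq w -> v = w.
Proof. by case: v => j t; case: w => j' t'; apply: vert_eq. Qed.

Lemma pl0 k d (t : d.-tuple 'I_k) : pl t 0 = vroot k d.
Proof.
apply: vert_eq2; first by rewrite vdep_pl.
apply/eqP; rewrite -size_eq0.
have -> : size (vseq (pl t 0)) = vdep (pl t 0) by rewrite /vseq size_tuple.
by rewrite vdep_pl.
Qed.

Lemma size_vseq k d (v : vert k d) : size (vseq v) = vdep v.
Proof. by rewrite /vseq size_tuple. Qed.

Lemma pld k d (t : d.-tuple 'I_k) (x0 : 'I_k) : pl t d = vleaf t.
Proof.
apply: vert_eq2; first by rewrite vdep_pl.
by rewrite (vseq_pl _ x0) // take_oversize // size_tuple.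
Qed.

Lemma vseq_par k d (v : vert k d) : vseq (vpar v) = take (vdep v).-1 (vseq v).
Proof.
case: v => j t; rewrite /vseq /vdep /=; have := mk_take0 t (leq_pred j); rewrite /= => -> //.
Qed.

Lemma vdep_par2 k d (v : vert k d) : vdep (vpar v) = (vdep v).-1.
Proof. by case: v. Qed.

Lemma pl_par k d (t : d.-tuple 'I_k) n (x0 : 'I_k) : (n < d)%N ->
  vpar (pl t n.+1) = pl t n.
Proof.
move=> lt; have le := ltnW lt; apply: vert_eq2.
  rewrite vdep_par2 (vdep_pl _ lt) (vdep_pl _ le); by [].
rewrite vseq_par (vdep_pl _ lt) (vseq_pl _ x0 lt) (vseq_pl _ x0 le) /=.
by rewrite take_takel.
Qed.

Lemma pl_neq k d (t : d.-tuple 'I_k) n : (n < d)%N -> pl t n.+1 != vroot k d.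
Proof. by move=> lt; apply/eqP => /(congr1 (@vdep k d)); rewrite (vdep_pl _ lt). Qed.


Definition chi (R : ringType) (b : bool) : R := if b then -1 else 1.

Lemma chi_add (R : ringType) a b : chi R (a (+) b) = chi R a * chi R b.
Proof. by case: a; case: b; rewrite /chi /= ?mulN1r ?mulr1 ?mul1r ?opprK. Qed.

Lemma chi_sq (R : ringType) a : chi R a * chi R a = 1.
Proof. by case: a; rewrite /chi ?mulN1r ?opprK ?mulr1. Qed.

Lemma chi_pl (R : comRingType) k d (t : d.-tuple 'I_k) (x0 : 'I_k) (s : {ffun vert k d -> bool}) n :
  (n <= d)%N ->
  chi R (s (pl t n)) = \prod_(i < n.+1) chi R (flipv s (pl t i)).
Proof.
elim: n => [_|n IH lt].
  rewrite big_ord1.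
  have -> : pl t (@ord0 0) = pl t 0 by [].
  by rewrite pl0 /flipv /flipf ffunE eqxx.
rewrite big_ord_recr.
have -> : pl t (@ord_max n.+1) = pl t n.+1 by [].
rewrite -(IH (ltnW lt)) /flipv /flipf ffunE (negbTE (pl_neq t lt)).
rewrite (pl_par t x0 lt) chi_add; by rewrite /= mulrCA chi_sq mulr1.
Qed.

Section Corr.
Variables (k d : nat) (a b : d.-tuple 'I_k) (x0 : 'I_k) (p : nat).
Hypothesis hp : (p < d)%N.
Hypothesis hab : forall j, (j < p)%N -> nth x0 a j = nth x0 b j.
Hypothesis hne : nth x0 a p != nth x0 b p.

Lemma pl_eq_lo n : (n <= p)%N -> pl a n = pl b n.
Proof.
move=> le; have led : (n <= d)%N by apply: leq_trans le (ltnW hp).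
apply: vert_eq2; first by rewrite (vdep_pl _ led) (vdep_pl _ led).
rewrite (vseq_pl _ x0 led) (vseq_pl _ x0 led).
apply: (@eq_from_nth _ x0); first by rewrite !size_take !size_tuple.
move=> j; rewrite size_take size_tuple => lt.
have ljn : (j < n)%N.
  by move: lt led; case: (ltnP n d) => H; lia.
by rewrite !nth_take // hab // (leq_trans ljn le).
Qed.

Lemma pl_inj (t t' : d.-tuple 'I_k) n n' : (n <= d)%N -> (n' <= d)%N ->
  pl t n = pl t' n' -> n = n'.
Proof. by move=> l1 l2 /(congr1 (@vdep k d)); rewrite (vdep_pl _ l1) (vdep_pl _ l2). Qed.

Lemma pl_neq_hi n n' : (p < n)%N -> (n <= d)%N -> (n' <= d)%N -> pl a n != pl b n'.
Proof.
move=> l1 l2 l3; apply/eqP => E.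
have en := pl_inj l2 l3 E; subst n'.
move: (congr1 (@vseq k d) E); rewrite (vseq_pl _ x0 l2) (vseq_pl _ x0 l3).
move/(congr1 (fun s => nth x0 s p)); rewrite !nth_take //.
by move/eqP; rewrite (negbTE hne).
Qed.

Definition fa (x : 'I_(d - p)) := pl a (val x + p.+1).
Definition fb (x : 'I_(d - p)) := pl b (val x + p.+1).

Lemma fx_le (x : 'I_(d - p)) : (val x + p.+1 <= d)%N.
Proof. change (nat_of_ord x + p.+1 <= d)%N; have := ltn_ord x; move: hp; lia. Qed.

Definition Pset := fa @: {: 'I_(d - p)} :|: fb @: {: 'I_(d - p)}.

Lemma fa_inj : injective fa.
Proof. by move=> x y /(pl_inj (fx_le x) (fx_le y)) /addIn /val_inj. Qed.
Lemma fb_inj : injective fb.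
Proof. by move=> x y /(pl_inj (fx_le x) (fx_le y)) /addIn /val_inj. Qed.

Lemma Pdisj : [disjoint fa @: {: 'I_(d - p)} & fb @: {: 'I_(d - p)}].
Proof.
rewrite -setI_eq0; apply/eqP/setP => v; rewrite !inE.
apply/negbTE/negP => /andP[/imsetP[x _ ->] /imsetP[y _ /eqP]].
by rewrite (negbTE (pl_neq_hi _ (fx_le x) (fx_le y))) // addnS ltnS leq_addl.
Qed.

Lemma card_Pset : #|Pset| = (2 * (d - p))%N.
Proof.
rewrite /Pset cardsU (disjoint_setI0 Pdisj) cards0 subn0.
by rewrite !card_imset ?card_ord //; [lia | exact: fb_inj | exact: fa_inj].
Qed.

Lemma root_notin : vroot k d \notin Pset.
Proof.
rewrite !inE; apply/norP; split; apply/negP => /imsetP[x _ /(congr1 (@vdep k d))];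
  by rewrite vdep_pl ?fx_le // addnS.
Qed.

Lemma corr (R : comRingType) (s : {ffun vert k d -> bool}) :
  chi R (s (vleaf a)) * chi R (s (vleaf b)) = \prod_(v in Pset) chi R (flipv s v).
Proof.
rewrite -(pld a x0) -(pld b x0) (chi_pl R a x0 s (leqnn d)) (chi_pl R b x0 s (leqnn d)) -big_split.
rewrite -(big_mkord xpredT (fun i => chi R (flipv s (pl a i)) * chi R (flipv s (pl b i)))).
have hp' : (p.+1 <= d.+1)%N by apply: ltnW.
rewrite (big_cat_nat (leq0n p.+1) hp').
rewrite big_nat_cond big1 ?mul1m; last first.
  by move=> i /andP[/andP[_ /ltnSE le] _]; rewrite (pl_eq_lo le) chi_sq.
rewrite -{1}[p.+1]add0n big_addn subSS big_mkord big_split.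
rewrite (eq_bigl [predU (fa @: {:'I_(d-p)}) & (fb @: {:'I_(d-p)})]); last by move=> v; rewrite !inE.
rewrite bigU ?Pdisj // !big_imset; [|exact: (in2W fb_inj)|exact: (in2W fa_inj)].
rewrite Monoid.mul1m.
by apply: congr2; apply: eq_big => [x|x _]; rewrite ?inE // /fa /fb.
Qed.
End Corr.

Definition Lof k d (s : {ffun vert k d -> bool}) : {ffun d.-tuple 'I_k -> bool} :=
  [ffun t => s (vleaf t)].

Lemma leaf_event1 (R : realType) (theta : R) k d (a b : d.-tuple 'I_k) :
  \sum_(x : {ffun d.-tuple 'I_k -> bool} | x a == x b) leafLaw theta x =
  \sum_(s : {ffun vert k d -> bool}) (s (vleaf a) == s (vleaf b))%:R * bjoint theta s.
Proof.
rewrite /leafLaw.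
under eq_bigr do rewrite big_mkcond.
rewrite exchange_big /=; apply: eq_bigr => s _.
rewrite big_mkcond (bigD1 (Lof s)) //= big1 ?addr0.
  rewrite !ffunE.
  have -> : [forall t, s (vleaf t) == Lof s t] by apply/forallP => t; rewrite ffunE.
  by case: (s (vleaf a) == s (vleaf b)); rewrite ?mul1r ?mul0r.
move=> x nx; case: ifP => // _; case: ifP => // /forallP H.
by case/eqP: nx; apply/ffunP => t; rewrite ffunE (eqP (H t)).
Qed.

Lemma ind_chi (R : realType) (a b : bool) :
  (a == b)%:R = (1 + chi R a * chi R b) / 2 :> R.
Proof. by case: a; case: b; rewrite /chi /=; field. Qed.

Section LE.
Variables (R : realType) (theta : R) (k d : nat) (a b : d.-tuple 'I_k) (x0 : 'I_k) (p : nat).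
Hypothesis hp : (p < d)%N.
Hypothesis hab : forall j, (j < p)%N -> nth x0 a j = nth x0 b j.
Hypothesis hne : nth x0 a p != nth x0 b p.

Let P := Pset a b p.

Let F (e : {ffun vert k d -> bool}) : R :=
  (\prod_v Wv theta v (e v) +
   \prod_v (Wv theta v (e v) * (if v \in P then chi R (e v) else 1))) / 2.

Lemma termF (s : {ffun vert k d -> bool}) :
  (s (vleaf a) == s (vleaf b))%:R * bjoint theta s = F (flipv s).
Proof.
rewrite ind_chi (corr hp hab hne) bjoint_flip /F big_split /= -big_mkcond.
by rewrite mulrC mulrA mulrDr mulr1 [_ * \prod_(v in P) _]mulrC.
Qed.

Lemma leaf_event :
  \sum_(x : {ffun d.-tuple 'I_k -> bool} | x a == x b) leafLaw theta x =
  (1 + theta ^+ (2 * (d - p))) / 2.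
Proof.
rewrite leaf_event1; under eq_bigr do rewrite termF.
have hinj := @flipf_inj _ (vroot k d) (@vpar k d) (@vdep k d) (@vdep_par k d).
have -> : \sum_(s : {ffun vert k d -> bool}) F (flipv s) = \sum_e F e.
  by rewrite [RHS](reindex_inj hinj).
rewrite /F -mulr_suml big_split /=.
rewrite -!bigA_distr_bigA /=.
congr ((_ + _) / 2).
  apply: big1 => v _; rewrite big_bool /Wv /wt.
  by case: eqP => _ /=; field.
rewrite -(bigA_distr_bigA (fun v (bb : bool) => Wv theta v bb * (if v \in P then chi R bb else 1))).
rewrite -(card_Pset hp hne) -prodr_const [RHS]big_mkcond /=.
apply: eq_bigr => v _; rewrite big_bool /= /Wv /wt /chi.
rewrite /P; case: (boolP (v \in Pset a b p)) => vP.
  have -> : (v == vroot k d) = false.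
    by apply/negbTE; apply: contraTneq vP => ->; exact: (root_notin hp hne).
  by field.
by case: eqP => _; field.
Qed.
End LE.

Lemma count_dep m (S : {set 'I_m}) (g : {ffun 'I_m -> bool} -> bool)
  (hg : forall w w' : {ffun 'I_m -> bool}, (forall i, i \in S -> w i = w' i) -> g w = g w') :
  (2 ^ #|~: S| %| #|[set w | g w]|)%N.
Proof.
pose proj (w : {ffun 'I_m -> bool}) : {ffun 'I_m -> bool} :=
  [ffun i => if i \in S then w i else false].
have hproj (w : {ffun 'I_m -> bool}) : forall i, i \in S -> w i = proj w i by move=> i iS; rewrite ffunE iS.
rewrite -[X in (_ %| X)%N]sum1_card (partition_big proj xpredT) //=.
apply: dvdn_sum => v _.
case: (boolP (g v && (proj v == v))) => [/andP[gv /eqP pv]|H]; last first.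
  rewrite big_pred0 ?dvdn0 // => w; rewrite inE; apply/negbTE.
  apply: contraNN H => /andP[gw /eqP pw]; apply/andP; split.
    by rewrite -pw -(hg _ _ (hproj w)).
  by rewrite -pw; apply/eqP/ffunP => i; rewrite /proj !ffunE; case: (i \in S).
pose F := fun i : 'I_m => [pred y : bool | (i \notin S) || (y == v i)].
rewrite (eq_bigl (fun w => w \in family F)); last first.
  move=> w; rewrite inE; apply/andP/familyP.
    move=> [gw /eqP pw] i; rewrite inE; case: (boolP (i \in S)) => //= iS.
    by rewrite -pw ffunE iS.
  move=> Hf; split.
    rewrite (hg w v) // => i iS; have := Hf i; rewrite inE iS /=; exact/eqP.
  apply/eqP/ffunP => i; rewrite ffunE; case: ifP => iS.
    by have := Hf i; rewrite inE iS /= => /eqP.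
  by rewrite -pv ffunE iS.
rewrite sum1_card card_family foldrE big_map big_enum /=.
have -> : (\prod_(i in 'I_m) #|(fun x : bool => (i \notin S) || (x == v i))| = 2 ^ #|~: S|)%N.
  rewrite -prod_nat_const [RHS]big_mkcond /=; apply: eq_bigr => i _.
  rewrite inE; case: (boolP (i \in S)) => iS /=.
    by rewrite -(card1 (v i)); apply: eq_card => y.
  by rewrite -card_bool; apply: eq_card => y.
by [].
Qed.

Lemma div_pow (R : realType) K a b :
  (K * 2 ^ a)%:R / 2 ^+ (a + b) = K%:R / (2 ^+ b : R).
Proof.
rewrite natrM natrX exprD.
have h2 : (2 : R) ^+ a != 0 by rewrite expf_neq0 // pnatr_eq0.
have h3 : (2 : R) ^+ b != 0 by rewrite expf_neq0 // pnatr_eq0.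
by field; rewrite h2 h3.
Qed.

Lemma push_event (R : realType) m (O : finType) c
  (f : {ffun 'I_m -> bool} -> {ffun O -> bool}) (hf : local_c c f) (a b : O) :
  exists N : nat, \sum_(x : {ffun O -> bool} | x a == x b) pushLaw R f x = N%:R / 2 ^+ (2 * c).
Proof.
have [Sa [ca ha]] := hf a; have [Sb [cb hb]] := hf b.
pose S := Sa :|: Sb.
have cS : (#|S| <= 2 * c)%N by rewrite /S cardsU; lia.
pose g (w : {ffun 'I_m -> bool}) := f w a == f w b.
have hg : forall w w' : {ffun 'I_m -> bool}, (forall i, i \in S -> w i = w' i) -> g w = g w'.
  move=> w w' H; rewrite /g (ha w w') ?(hb w w') // => i iS; apply: H; rewrite inE iS ?orbT //.
have [K HK] := dvdnP (count_dep hg).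
have cC : #|~: S| = (m - #|S|)%N.
  by have := cardsC S; rewrite card_ord; lia.
have sm : (#|S| <= m)%N by have := cardsC S; rewrite card_ord; lia.
have -> : \sum_(x : {ffun O -> bool} | x a == x b) pushLaw R f x = #|[set w | g w]|%:R / 2 ^+ m.
  rewrite /pushLaw -mulr_suml -natr_sum; congr (_%:R / _).
  rewrite -[RHS]sum1_card (partition_big f (fun x : {ffun O -> bool} => x a == x b)) => [|w]; last by rewrite inE.
  apply: eq_bigr => x xab; rewrite -sum1_card; apply: eq_bigl => w; rewrite !inE.
  case E : (f w == x); rewrite ?andbT ?andbF // /g; move/eqP: E => ->; by rewrite xab.
exists (K * 2 ^ (2 * c - #|S|))%N.
have -> : (2:R) ^+ m = 2 ^+ (m - #|S| + #|S|) by rewrite subnK.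
have -> : (2:R) ^+ (2 * c) = 2 ^+ (2 * c - #|S| + #|S|) by rewrite subnK.
by rewrite HK cC !div_pow.
Qed.

Lemma bernoulli (R : realType) (r : R) n : 0 <= r -> 1 + n%:R * r <= (1 + r) ^+ n.
Proof.
move=> r0; elim: n => [|n IH]; first by rewrite mul0r addr0 expr0.
rewrite exprSr -natr1.
have h1 : 0 <= n%:R * r by apply: mulr_ge0.
nra.
Qed.

Lemma geom_small (R : realType) (th eps : R) : 0 < th -> th < 1 -> 0 < eps ->
  exists n : nat, th ^+ n <= eps.
Proof.
move=> t0 t1 e0.
pose r := th^-1 - 1.
have r0 : 0 < r by rewrite /r subr_gt0 invf_gt1.
have e1 : 0 <= (eps * r)^-1 by rewrite invr_ge0; apply: mulr_ge0; apply: ltW.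
pose n := Num.bound ((eps * r)^-1).
have hn := archi_boundP e1.
exists n.
have B := bernoulli n (ltW r0).
have E : 1 + r = th^-1 by rewrite /r addrC subrK.
rewrite E in B.
have XY : th ^+ n * th^-1 ^+ n = 1 by rewrite -exprMn mulfV ?expr1n // gt_eqF.
have X0 : 0 < th ^+ n by apply: exprn_gt0.
have Y0 : 0 < th^-1 ^+ n by apply: exprn_gt0; rewrite invr_gt0.
have er0 : 0 < eps * r by apply: mulr_gt0.
have hn1 : 1 < n%:R * (eps * r).
  by move: hn; rewrite -[X in X < _]mul1r ltr_pdivrMr.
move: XY X0 Y0 hn1 B; set X := th ^+ n; set Y := th^-1 ^+ n; set N := (n%:R : R).
move=> XY X0 Y0 hn1 B.
nra.
Qed.

Lemma tv_event (R : realType) (T : finType) (P Q : T -> R) (E : pred T) :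
  2^-1 * `|\sum_(x | E x) P x - \sum_(x | E x) Q x| <= tvdist P Q.
Proof.
rewrite /tvdist ler_wpM2l ?invr_ge0 ?ler0n // -sumrB.
apply: le_trans (ler_norm_sum _ _ _) _.
rewrite [X in _ <= X](bigID E) /= lerDl.
by apply: sumr_ge0 => x _.
Qed.

Unset Implicit Arguments.
Set Strict Implicit.

Theorem mainTheorem11 (R : realType) (k : nat) (theta : R)
    (hk : (2 <= k)%N) (htheta : 0 < theta < 1)
    (c : nat) (m : nat -> nat)
    (f : forall d : nat,
           {ffun 'I_(m d) -> bool} -> {ffun d.-tuple 'I_k -> bool})
    (hf : forall d : nat, local_c c (f d)) :
  exists eps : R, 0 < eps /\ exists D : nat, forall d : nat, (D <= d)%N ->
    eps <= tvdist (@pushLaw R (m d) _ (f d)) (@leafLaw R theta k d).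
Proof.
have /andP[t0 t1] := htheta.
pose M : R := 2 ^+ (2 * c).
have M0 : 0 < M by apply: exprn_gt0.
have u0 : 0 < (2 * M)^-1 by rewrite invr_gt0; apply: mulr_gt0.
have [n hn] := geom_small t0 t1 u0.
pose h := n.+1.
pose t := theta ^+ (2 * h).
have tu : t <= (2 * M)^-1.
  apply: le_trans hn; apply: ler_wiXn2l; [exact: ltW | exact: ltW | rewrite /h; lia].
have tpos : 0 < t by apply: exprn_gt0.
exists (t / 4); split; first by apply: divr_gt0.
exists h => d hd.
pose p := (d - h)%N.
have hp : (p < d)%N by rewrite /p /h in hd *; lia.
have dp : (d - p)%N = h by rewrite /p /h in hd *; lia.
pose z : 'I_k := Ordinal (ltnW hk).
pose o : 'I_k := Ordinal hk.
have sa : size (nseq d z) == d by rewrite size_nseq.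
have sb : size (set_nth z (nseq d z) p o) == d.
  by rewrite size_set_nth size_nseq; apply/eqP/maxn_idPr.
pose a := @Tuple d 'I_k (nseq d z) sa.
pose b := @Tuple d 'I_k (set_nth z (nseq d z) p o) sb.
have hab : forall j, (j < p)%N -> nth z a j = nth z b j.
  by move=> j jp; rewrite /= nth_set_nth /= (ltn_eqF jp).
have hne : nth z a p != nth z b p.
  by rewrite /= nth_set_nth /= eqxx nth_nseq hp.
have LE := leaf_event theta hp hab hne.
rewrite dp -/t in LE.
have [N PE] := @push_event R (m d) _ c (f d) (hf d) a b.
have TV := tv_event (@pushLaw R (m d) _ (f d)) (@leafLaw R theta k d) (fun x => x a == x b).
rewrite PE LE -/M in TV.
apply: le_trans TV.
set y := N%:R / M.
suff key : t / 2 <= `|y - (1 + t) / 2| by lra.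
case: (leqP (2 * N) (2 ^ (2 * c))) => HN.
  have y1 : y <= 1 / 2.
    rewrite /y ler_pdivrMr //.
    have : ((2 * N)%:R <= (2 ^ (2 * c))%:R :> R) by rewrite ler_nat.
    rewrite natrM natrX -/M; lra.
  rewrite distrC; apply: le_trans (ler_norm _); lra.
have y2 : 1 / 2 + (2 * M)^-1 <= y.
  rewrite /y ler_pdivlMr //.
  have : (((2 ^ (2 * c)).+1)%:R <= (2 * N)%:R :> R) by rewrite ler_nat.
  rewrite -natr1 natrM natrX -/M.
  have -> : (1 / 2 + (2 * M)^-1) * M = M / 2 + 1 / 2 by field; rewrite gt_eqF.
  lra.
apply: le_trans (ler_norm _); lra.
Qed.
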